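(* Consider the selection task with rank queries. For every $n\ge1$, $k\ge1$ and $p\in[0,1]$, there is a deterministic algorithm that runs in $k$ rounds on a uniformly random input of length $n$, succeeds with probability at least $p$, and issues at most $np\bigl(1-\frac{k-1}{2k}p\bigr)+1$ queries in expectation.
   Context: Selection with rank queries: there is a vector $\vec{x}=(x_1,\ldots,x_n)$ whose ranks form an unknown permutation of $\{1,\ldots,n\}$; a rank $r\in\{1,\ldots,n\}$ is given and the goal is to output the index $i$ with $\mathrm{rank}(x_i)=r$. Queries have the form ''How is $\mathrm{rank}(x_j)$ compared to $m$?'', with answer ''$<$'', ''$=$'' or ''$>$''. An algorithm runs in $k$ rounds if in each of $k$ rounds it submits a set of queries chosen depending only on answers of earlier rounds, then receives all answers. ''Uniformly random input'' means the rank permutation is uniformly random; probabilities and expectations are over it. *)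

(* Defs.v *)
From HB Require Import structures.
From mathcomp Require Import all_boot all_order all_algebra all_fingroup.
From mathcomp Require Import reals.
Set Implicit Arguments. Unset Strict Implicit. Unset Printing Implicit Defensive.
Import Order.TTheory GRing.Theory Num.Theory.

(* Indices and ranks are 0-based: an input of length n is a permutation
   s : 'S_n, where s i is the rank of x_i (rank r of the paper = r-1 here). *)

(* A rank query "How is rank(x_j) compared to m?" is the pair (j, m). *)
Definition query (n : nat) : Type := ('I_n * 'I_n)%type.

Definition answer (n : nat) (s : 'S_n) (q : query n) : comparison :=
  Nat.compare (s q.1) q.2.

(* The transcript of the rounds performed so far: for each round, the list of
   queries submitted in that round together with their answers. *)
Definition history (n : nat) : Type := seq (seq (query n * comparison)).

Record algorithm (n : nat) : Type := Algorithm {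
  next_round : history n -> seq (query n);
  output : history n -> 'I_n
}.

Fixpoint run (n : nat) (A : algorithm n) (s : 'S_n) (k : nat) : history n :=
  match k with
  | 0 => [::]
  | k'.+1 =>
      let h := run A s k' in
      rcons h [seq (q, answer s q) | q <- next_round A h]
  end.

Definition num_queries (n : nat) (A : algorithm n) (s : 'S_n) (k : nat) : nat :=
  sumn [seq size rd | rd <- run A s k].

Definition succeeds (n : nat) (A : algorithm n) (k : nat) (r : 'I_n) (s : 'S_n)
  : bool := s (output A (run A s k)) == r.

Local Open Scope ring_scope.

Definition success_prob (R : realType) (n : nat) (A : algorithm n) (k : nat)
  (r : 'I_n) : R :=
  #|[set s : 'S_n | succeeds A k r s]|%:R / (n`!)%:R.

Definition expected_queries (R : realType) (n : nat) (A : algorithm n) (k : nat)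
  : R :=
  (\sum_(s : 'S_n) (num_queries A s k)%:R) / (n`!)%:R.

(* Main.v *)
Require Import Defs.
From HB Require Import structures.
From mathcomp Require Import all_boot all_order all_algebra all_fingroup.
From mathcomp Require Import reals.
From mathcomp Require Import zify ring lra.
From Stdlib Require Import PeanoNat.
Import Order.TTheory GRing.Theory Num.Theory.

Lemma cnt n (P : pred 'I_n) : count P (enum 'I_n) = \sum_(j : 'I_n) (P j : nat).
Proof.
rewrite -sum1_count big_mkcond /= big_enum /=.
by apply: eq_bigr => j _; case: (P j).
Qed.

Definition isEq (c : comparison) : bool := if c is Eq then true else false.

Section Alg.
Variables (n m q : nat) (r d : 'I_n).

Definition has_eq (h : history n) : bool :=
  has (fun qa : query n * comparison => isEq qa.2) (flatten h).
Definition batch (i : nat) : seq 'I_n :=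
  [seq j <- enum 'I_n | ((j : 'I_n) < m) && (j %/ q == i)].
Definition alg : algorithm n :=
  @Algorithm n (fun h => if has_eq h then [::] else [seq (j, r) | j <- batch (size h)])
    (fun h => head d [seq qa.1.1 | qa <- flatten h & isEq qa.2]).

Variable s : 'S_n.
Let J := (s^-1)%g r.
Lemma sJ : s J = r. Proof. by rewrite /J permKV. Qed.

Lemma ansEq j : isEq (answer s (j, r)) = (j == J).
Proof.
rewrite /answer /=.
case E: (Nat.compare _ _); apply/esym/eqP => //.
- move/Nat.compare_eq_iff: E => h.
  have h' : s j = r by apply: val_inj.
  by rewrite /J -h' permK.
- by move=> hj; move: E; rewrite hj sJ Nat.compare_refl.
- by move=> hj; move: E; rewrite hj sJ Nat.compare_refl.
Qed.

Lemma run_size i : size (run alg s i) = i.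
Proof. by elim: i => //= i IH; rewrite size_rcons IH. Qed.

Lemma run_inv i : all (fun qa : query n * comparison => (qa.1.2 == r) && (isEq qa.2 == isEq (answer s qa.1)))
   (flatten (run alg s i)).
Proof.
elim: i => //= i IH.
rewrite -cats1 flatten_cat all_cat IH /= cats0.
case: ifP => _ //=.
rewrite -map_comp all_map.
by apply/allP => j _ /=; rewrite !eqxx.
Qed.

Lemma run_has i : has_eq (run alg s i) = (J < m) && (J %/ q < i).
Proof.
elim: i => [|i IH]; first by rewrite /has_eq /= andbF.
rewrite /= IH run_size.
move: IH; rewrite /has_eq => IH.
rewrite -cats1 flatten_cat has_cat /= cats0 IH.
case: ifP => H.
  by case/andP: H => -> h /=; rewrite ltnS ltnW.
have -> : has (fun qa : query n * comparison => isEq qa.2)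
     [seq (q0, answer s q0) | q0 <- [seq (j, r) | j <- batch i]] = (J \in batch i).
  rewrite -map_comp has_map.
  apply/hasP/idP => [[j jin /=]|Jin]; first by rewrite ansEq => /eqP <-.
  by exists J => //=; rewrite ansEq.
rewrite mem_filter mem_enum andbT /= ltnS (leq_eqVlt (J %/ q)).
by case: (J < m) H => //= ->; rewrite orbF.
Qed.

Lemma run_nq i : num_queries alg s i =
  \sum_(j : 'I_n) ((j < m) && (j %/ q < i) && ~~((J < m) && (J %/ q < j %/ q)) : nat).
Proof.
elim: i => [|i IH].
  by rewrite /num_queries /=; rewrite big1 // => j _; rewrite ltn0 andbF.
rewrite /num_queries /= map_rcons sumn_rcons.
have -> : sumn [seq size rd | rd <- run alg s i] = num_queries alg s i by [].
rewrite IH.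
have -> : has_eq (run alg s i) = (J < m) && (J %/ q < i) by apply: run_has.
rewrite run_size.
case: ifP => c.
  rewrite addn0; apply: eq_bigr => j _.
  case/andP: c => c1 c2.
  case: (ltngtP (j %/ q) i) => h.
  - by rewrite ltnS (ltnW h).
  - by rewrite ltnS (leqNgt (j %/ q)) h andbF.
  - rewrite h c1 c2 /=. by rewrite !andbF.
rewrite !size_map size_filter cnt -big_split /=.
apply: eq_bigr => j _.
case: (ltngtP (j %/ q) i) => h.
- by rewrite ltnS (ltnW h) andbF addn0 andbT.
- by rewrite ltnS (leqNgt (j %/ q)) h !andbF.
- by rewrite h ltnSn c !andbF !andbT.
Qed.

Variable k : nat.
Hypothesis Hbk : forall j : nat, j < m -> j %/ q < k.

Lemma succ (hd : val d = m) : J <= m -> succeeds alg k r s.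
Proof.
move=> hJm; rewrite /succeeds /=.
set l := [seq qa.1.1 | qa <- flatten (run alg s k) & isEq qa.2].
have Hl : all (fun x => x == J) l.
  rewrite /l all_map all_filter.
  apply: sub_all (run_inv k) => -[[j r'] c] /= /andP [/eqP h1 /eqP h2]; subst r'.
  by apply/implyP => he; rewrite -ansEq -h2.
case: (ltnP J m) => hJ.
  have : has_eq (run alg s k) by rewrite run_has hJ Hbk.
  rewrite /has_eq has_count => ne.
  have : 0 < size l by rewrite /l size_map size_filter.
  case E: l Hl => [|x l'] // /andP [/eqP -> _] _ /=.
  by rewrite sJ.
have hjm : J = d.
  by apply: val_inj; rewrite /= hd; apply/eqP; rewrite eqn_leq hJm hJ.
have : ~~ has_eq (run alg s k) by rewrite run_has ltnNge hJ.
rewrite /has_eq has_count -leqNgt leqn0 => /eqP E.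
have : size l = 0 by rewrite /l size_map size_filter.
by move/size0nil => ->; rewrite /= -hjm sJ.
Qed.

Lemma nq_final : num_queries alg s k =
  \sum_(j : 'I_n) ((j < m) && ~~((J < m) && (J %/ q < j %/ q)) : nat).
Proof.
rewrite run_nq; apply: eq_bigr => j _.
by case hj: (j < m) => //=; rewrite Hbk.
Qed.

End Alg.

Lemma HN n (r j : 'I_n) :
  \sum_(s : 'S_n) (s j == r : nat) = \sum_(s : 'S_n) (s r == r : nat).
Proof.
rewrite (reindex_inj (mulgI (tperm r j))).
by apply: eq_bigr => s _; rewrite permM tpermR.
Qed.

Lemma Hpt n (r : 'I_n) (G : 'I_n -> nat) (s : 'S_n) :
  G ((s^-1)%g r) = \sum_(j : 'I_n) (s j == r) * G j.
Proof.
rewrite (bigD1 ((s^-1)%g r)) //= permKV eqxx mul1n big1 ?addn0 // => j hj.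
by case: eqP => [h|] //; move: hj; rewrite -h permK eqxx.
Qed.

Lemma fiber n (r : 'I_n) (G : 'I_n -> nat) :
  \sum_(s : 'S_n) G ((s^-1)%g r) =
  (\sum_(s : 'S_n) (s r == r : nat)) * \sum_(j : 'I_n) G j.
Proof.
rewrite (eq_bigr _ (fun s _ => Hpt _ r G s)) exchange_big /= big_distrr /=.
by apply: eq_bigr => j _; rewrite -big_distrl /= HN.
Qed.

Lemma fiberN n (r : 'I_n) : n * \sum_(s : 'S_n) (s r == r : nat) = n`!.
Proof.
have -> : n * \sum_(s : 'S_n) (s r == r : nat) = \sum_(j : 'I_n) \sum_(s : 'S_n) (s j == r : nat).
  by rewrite (eq_bigr _ (fun j _ => HN _ r j)) sum_nat_const card_ord.
rewrite exchange_big /= -card_Sn -sum1_card.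
apply: eq_bigr => s _.
by rewrite (Hpt _ r (fun _ => 1%N) s); apply: eq_bigr => j _; rewrite muln1.
Qed.

Lemma sum_lt n m : \sum_(j : 'I_n) (j < m : nat) = minn n m.
Proof.
elim: n => [|n IH]; first by rewrite big_ord0 min0n.
rewrite big_ord_recr /= IH.
case: ltnP => h /=; lia.
Qed.

Lemma sum_div n q c : 0 < q -> \sum_(j : 'I_n) (j %/ q == c : nat) <= q.
Proof.
move=> q0.
have -> : \sum_(j : 'I_n) (j %/ q == c : nat) = #|[pred j : 'I_n | j %/ q == c]|.
  by rewrite -sum1_card [RHS]big_mkcond /=; apply: eq_bigr => j _; rewrite inE; case: eqP.
rewrite -[q in _ <= q]card_ord.
apply: (leq_card_in (fun j : 'I_n => Ordinal (ltn_pmod j q0))).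
move=> x y; rewrite !inE => /eqP hx /eqP hy [] hxy.
by apply: val_inj; rewrite /= (divn_eq x q) (divn_eq y q) hx hy hxy.
Qed.

Lemma count_bound n m q : m <= n -> 0 < q ->
  2 * \sum_(J : 'I_n) \sum_(j : 'I_n) ((j < m) && ~~((J < m) && (J %/ q < j %/ q)) : nat)
    + m * m <= 2 * n * m + q * m.
Proof.
move=> hmn q0.
have Sm : \sum_(j : 'I_n) (j < m : nat) = m by rewrite sum_lt; lia.
set S := \sum_(J : 'I_n) _.
set T := \sum_(J : 'I_n) \sum_(j : 'I_n) ((J < m) && (j < m) && (J %/ q < j %/ q) : nat).
set T' := \sum_(J : 'I_n) \sum_(j : 'I_n) ((j < m) && (J < m) && (j %/ q < J %/ q) : nat).
set D := \sum_(J : 'I_n) \sum_(j : 'I_n) ((J < m) && (j < m) && (J %/ q == j %/ q) : nat).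
have H1 : S + T = n * m.
  rewrite /S /T -big_split /=.
  rewrite (eq_bigr (fun _ => m)); first by rewrite sum_nat_const card_ord.
  move=> J _; rewrite -big_split /= -[RHS]Sm; apply: eq_bigr => j _.
  by case: (j < m); case: (J < m); case: (_ < _).
have H2 : T = T' by rewrite /T exchange_big.
have H3 : T + T' + D = m * m.
  rewrite /T /T' /D -!big_split /=.
  have E : forall J : 'I_n, \sum_(j : 'I_n) ((J < m) && (j < m) : nat) = (J < m) * m.
    by move=> J; case: (J < m) => /=; rewrite ?mul1n ?mul0n ?Sm // big1.
  have -> : m * m = \sum_(J : 'I_n) \sum_(j : 'I_n) ((J < m) && (j < m) : nat).
    by rewrite (eq_bigr _ (fun J _ => E J)) -big_distrl /= Sm.
  apply: eq_bigr => J _; rewrite -!big_split /=.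
  apply: eq_bigr => j _.
  by case: (ltngtP (J %/ q) (j %/ q)) => h; case: (J < m); case: (j < m).
have H4 : D <= q * m.
  have -> : q * m = \sum_(J : 'I_n) (J < m) * q by rewrite -big_distrl /= Sm mulnC.
  apply: leq_sum => J _.
  case: (J < m) => /=; last by rewrite mul0n big1.
  rewrite mul1n.
  apply: leq_trans (sum_div n q (J %/ q) q0).
  apply: leq_sum => j _; rewrite eq_sym.
  by case: (j < m); case: (_ == _).
lia.
Qed.

Local Open Scope ring_scope.

Lemma choose_m (R : realType) (x : R) N : 0 <= x -> x <= N.+1%:R ->
  exists m : nat, (m <= N)%N /\ m%:R <= x /\ x <= m.+1%:R.
Proof.
elim: N x => [|N IH] x x0 xN; first by exists 0%N.
case: (lerP x N.+1%:R) => h.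
  have [m [hm [h1 h2]]] := IH x x0 h.
  by exists m; split => //; apply: leqW.
by exists N.+1; split => //; split => //; apply: ltW.
Qed.

Theorem proposition8 (R : realType) (n k : nat) (p : R) (r : 'I_n) :
  (1 <= n)%N -> (1 <= k)%N -> 0 <= p <= 1 ->
  exists A : algorithm n,
    p <= success_prob R A k r /\
    expected_queries R A k
      <= n%:R * p * (1 - (k%:R - 1) / (2 * k%:R) * p) + 1.
Proof.
move=> n1 k1 /andP [p0 p1].
have [m [hm [h1 h2]]] : exists m : nat, (m <= n.-1)%N /\ m%:R <= n%:R * p /\ n%:R * p <= m.+1%:R.
  apply: choose_m; first by rewrite mulr_ge0.
  rewrite prednK // -[X in _ <= X]mulr1; apply: ler_wpM2l => //.
have hmn : (m < n)%N by rewrite -(prednK n1) ltnS.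
pose q := (m %/ k).+1.
have q0 : (0 < q)%N by [].
have Hbk : forall j : nat, (j < m)%N -> (j %/ q < k)%N.
  move=> j hj; rewrite ltn_divLR //.
  have := ltn_pmod m k1; have := divn_eq m k; rewrite /q; nia.
pose d := Ordinal hmn.
pose N := (\sum_(s : 'S_n) (s r == r : nat))%N.
have HnN : (n * N = n`!)%N by apply: fiberN.
have N0 : (0 < N)%N.
  have := fact_gt0 n; rewrite -HnN; case: (N) => //; by rewrite muln0.
exists (@alg n m q r d); split.
  have Hc : (N * m.+1 <= #|[set s : 'S_n | succeeds (@alg n m q r d) k r s]|)%N.
    have -> : m.+1 = \sum_(j : 'I_n) (j < m.+1 : nat) by rewrite sum_lt; lia.
    rewrite -fiber -sum1_card [X in (_ <= X)%N]big_mkcond /=.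
    apply: leq_sum => s _; rewrite inE.
    case: ltnP => h //=.
    by rewrite (@succ n m q r d s k Hbk).
  rewrite /success_prob -HnN ler_pdivlMr ?ltr0n ?muln_gt0 ?N0 ?(leq_trans _ n1) //.
  apply: le_trans (_ : (N * m.+1)%:R <= _); last by rewrite ler_nat.
  rewrite !natrM mulrA [p * _]mulrC [X in _ <= X]mulrC; apply: ler_wpM2r => //.
rewrite /expected_queries.
under eq_bigr => s _ do rewrite (@nq_final n m q r d s k Hbk).
rewrite -natr_sum (fiber _ r (fun J : 'I_n => \sum_(j : 'I_n) ((j < m) && ~~((J < m) && (J %/ q < j %/ q)) : nat))%N) -HnN.
set SQ := (\sum_(J : 'I_n) _)%N.
have CB := count_bound n m q (ltnW hmn) q0.
have QK : (q * k <= m + k)%N.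
  rewrite /q mulSn addnC leq_add2r; exact: leq_trunc_div.
have -> : (N * SQ)%:R / (n * N)%:R = SQ%:R / n%:R :> R.
  rewrite !natrM; field.
  by rewrite !pnatr_eq0 -!lt0n N0 (leq_trans _ n1).
rewrite ler_pdivrMr ?ltr0n ?(leq_trans _ n1) //.
have CBR : 2 * SQ%:R + m%:R * m%:R <= 2 * n%:R * m%:R + q%:R * m%:R :> R.
  by rewrite -!natrM -!natrD ler_nat.
have QKR : q%:R * k%:R <= m%:R + k%:R :> R by rewrite -natrM -natrD ler_nat.
have k1R : 1 <= k%:R :> R by rewrite ler1n.
have nR : m%:R + 1 <= n%:R :> R by rewrite natr1 ler_nat.
have q0R : 0 <= q%:R :> R by [].
set K := k%:R in QKR k1R *; set M := m%:R in CBR QKR h1 h2 nR *.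
set Nn := n%:R in CBR h1 h2 nR *; set Q := q%:R in CBR QKR q0R *; set S := SQ%:R in CBR *.
have M0 : 0 <= M by rewrite /M ler0n.
have Eq : (Nn * p * (1 - (K - 1) / (2 * K) * p) + 1) * (2 * K) =
    2 * K * Nn * p - (K - 1) * Nn * p ^+ 2 + 2 * K.
  field; lra.
have A1 : K * (2 * S + M * M) <= K * (2 * Nn * M + Q * M) by apply: ler_wpM2l => //; lra.
have A2 : Q * K * M <= (M + K) * M by apply: ler_wpM2r.
have A3 : 0 <= (Nn * p - M) * (2 * K * Nn - (K - 1) * (Nn * p + M)).
  apply: mulr_ge0; first lra.
  have : Nn * p <= Nn by rewrite -[X in _ <= X]mulr1 ler_wpM2l //; lra.
  nra.
have A4 : K * M <= 2 * K * Nn by nra.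
have key : 2 * K * S <= (2 * K * Nn * p - (K - 1) * Nn * p ^+ 2 + 2 * K) * Nn.
  rewrite expr2; nra.
rewrite -Eq in key.
nra.
Qed.
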